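(* Let $G$ be a flag with vertices $v_1,\dots,v_n$ ordered by increasing $x$-coordinate, and let $v_iv_j$ ($i<j$) be a separating edge. Then no edge of $G[V^+(v_iv_j)]$ intersects an edge of $G[V^-(v_iv_j)]$. Furthermore, if $e$ is an edge of $G[V^+(v_iv_j)]$ and $f$ is an edge of $G[V^-(v_iv_j)]$, then $e$ and $f$ are related and $f\prec e$.
   Context: Let $\mathcal C=S^1\times\mathbb R$ ($S^1=[0,1]$ with $0\sim1$), points $p=(p_x,p_y)$ with $0\le p_x<1$. A flag is a graph drawn on $\mathcal C$ (vertices distinct points, edges Jordan arcs, no overlapping edges, no edge through a vertex) that is complete, simple (any two edges meet in at most one point: a common endpoint or a proper crossing), monotone (every edge meets each vertical line $l_{x=a}=\{p:p_x=a\}$ at most once, no two vertices share an $x$-coordinate, no vertex has $x$-coordinate $0$), and such that $l_{x=0}$ meets every edge in its relative interior. A point $v$ is related to an $x$-monotone curve $e$ if $l_{x=v_x}$ meets $e$ in its relative interior; then $v$ is below (above) $e$ if $v_y$ is smaller (larger) than the $y$-coordinate of $l_{x=v_x}\cap e$. Two $x$-monotone curves $e,f$ are related if they do not cross, some vertical line meets both relative interiors, and all such lines meet them in the same vertical order; then $e\prec f$ means that on every vertical line meeting both relative interiors, $e$'s point has $y$-coordinate at most that of $f$'s point. For $i<j$, $V^+(v_iv_j)=\{v_s: s>j,\ v_s \text{ above } v_iv_j\}$ and $V^-(v_iv_j)=\{v_s: s>j,\ v_s \text{ below } v_iv_j\}$. The edge $v_iv_j$ is separating if $|V^+(v_iv_j)|>1$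 and $|V^-(v_iv_j)|>1$. For a vertex set $U$, $G[U]$ is the induced subgraph. *)

(* Defs.v *)
From HB Require Import structures.
From mathcomp Require Import all_boot all_order all_algebra.
From mathcomp Require Import all_classical all_reals all_analysis.
Set Implicit Arguments. Unset Strict Implicit. Unset Printing Implicit Defensive.
Import Order.TTheory GRing.Theory Num.Theory.
Import numFieldNormedType.Exports.
Local Open Scope ring_scope.
Local Open Scope classical_set_scope.

(* Encoding of a flag:
   - the cylinder S^1 x R has points (a, b) with 0 <= a < 1;
   - vertex v_i (i : 'I_n) is the point (x i, y i); vertices are indexed by
     increasing x-coordinate (hypothesis of the theorem);
   - for i < j, the edge v_i v_j is an x-monotone arc crossing l_{x=0} in its
     relative interior; its x-projection is therefore the circular arc from
     x j through 0 to x i.  We describe it by its "unrolled" parametrisation: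
     a function c i j, continuous on [x j, 1 + x i], whose graph point at
     parameter t is the cylinder point (frac t, c i j t). *)

Definition frac {R : realType} (t : R) : R := t - (Num.floor t)%:~R.

Section Defs.
Context {R : realType} {n : nat}.
Implicit Types (x y : 'I_n -> R) (c : 'I_n -> 'I_n -> R -> R).

Definition edom x (i j : 'I_n) (t : R) : bool := (x j <= t) && (t <= 1 + x i).
Definition eint x (i j : 'I_n) (t : R) : bool := (x j < t) && (t < 1 + x i).

Definition meet_at x c (i j k l : 'I_n) (s t : R) : Prop :=
  [/\ edom x i j s, edom x k l t, frac s = frac t & c i j s = c k l t].

Definition proper_crossing x c (i j k l : 'I_n) (s t : R) : Prop :=
  [/\ eint x i j s, eint x k l t, frac s = frac t, c i j s = c k l t &
    exists2 d : R, 0 < d & forall e : R, 0 < e < d ->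
      (c i j (s - e) - c k l (t - e)) * (c i j (s + e) - c k l (t + e)) < 0].

Definition is_flag x y c : Prop :=
  [/\ (forall i, 0 < x i < 1),
      (forall i j : 'I_n, i <> j -> x i <> x j),
      (forall i j : 'I_n, (i < j)%N ->
         [/\ {within [set t : R | edom x i j t], continuous (c i j : R -> R)},
             c i j (x j) = y j & c i j (1 + x i) = y i]),
      (forall i j k : 'I_n, (i < j)%N -> k <> i -> k <> j ->
         forall t, edom x i j t -> frac t = x k -> c i j t <> y k) &
      (forall i j k l : 'I_n, (i < j)%N -> (k < l)%N -> (i, j) <> (k, l) ->
         (forall s t s' t', meet_at x c i j k l s t -> meet_at x c i j k l s' t' ->
             frac s = frac s' /\ c i j s = c i j s') /\
         (forall s t, meet_at x c i j k l s t ->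
             (exists m : 'I_n, [/\ m = i \/ m = j, m = k \/ m = l,
                                   frac s = x m & c i j s = y m])
             \/ proper_crossing x c i j k l s t))].

Definition Vplus x y c (i j : 'I_n) : {set 'I_n} :=
  [set s : 'I_n | (j < s)%N &&
     `[< exists t, [/\ eint x i j t, frac t = x s & c i j t < y s] >]].
Definition Vminus x y c (i j : 'I_n) : {set 'I_n} :=
  [set s : 'I_n | (j < s)%N &&
     `[< exists t, [/\ eint x i j t, frac t = x s & y s < c i j t] >]].

Definition separating x y c (i j : 'I_n) : Prop :=
  (1 < #|Vplus x y c i j|)%N /\ (1 < #|Vminus x y c i j|)%N.

Definition common_line x (i j k l : 'I_n) (s t : R) : Prop :=
  [/\ eint x i j s, eint x k l t & frac s = frac t].

Definition prec x c (i j k l : 'I_n) : Prop :=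
  forall s t, common_line x i j k l s t -> c i j s <= c k l t.

Definition related x c (i j k l : 'I_n) : Prop :=
  [/\ ~ (exists s t, proper_crossing x c i j k l s t),
      (exists s t, common_line x i j k l s t) &
      prec x c i j k l \/ prec x c k l i j].

End Defs.

(* Main.v *)
Require Import Defs.
From HB Require Import structures.
From mathcomp Require Import all_boot all_order all_algebra.
From mathcomp Require Import all_classical all_reals all_analysis.
From mathcomp Require Import ring lra.
Import Order.TTheory GRing.Theory Num.Theory.
Import numFieldNormedType.Exports.
Local Open Scope ring_scope.
Local Open Scope classical_set_scope.

Section S.
Context {R : realType}.
Local Notation frac := Defs.frac.

Lemma fr_small (t : R) : 0 <= t < 1 -> frac t = t.
Proof.
move=> ht; rewrite /frac.
have -> : Num.floor t = 0.
  by apply/eqP; rewrite floor_eq /= add0r; lra.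
by rewrite subr0.
Qed.

Lemma fr_big (t : R) : 1 <= t < 2 -> frac t = t - 1.
Proof.
move=> ht; rewrite /frac.
have -> : Num.floor t = 1.
  apply/eqP; rewrite floor_eq /=.
  have -> : ((1 + 1)%:~R : R) = 2 by rewrite intrD.
  lra.
by [].
Qed.

Definition ivt_on (G : R -> R) (a b : R) :=
  forall u v, a <= u -> u <= v -> v <= b ->
    (G u <= 0 <= G v \/ G v <= 0 <= G u) -> exists z, u <= z <= v /\ G z = 0.

Lemma ivt_onP (G : R -> R) (a b : R) :
  (forall u v, a <= u -> u <= v -> v <= b -> {within `[u, v], continuous G}) ->
  ivt_on G a b.
Proof.
move=> cG u v au uv vb hs.
have := @IVT R G u v 0 uv (cG u v au uv vb).
case.
  rewrite ge_min le_max.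
  by case: hs => /andP[h1 h2]; rewrite ?h1 ?h2 ?orbT.
move=> z zin Gz.
by exists z; split => //; rewrite in_itv /= in zin.
Qed.


Lemma shift_cont (f : R -> R) (D A : set R) (s : R) :
  {within D, continuous f} -> (forall h, A h -> D (s + h)) ->
  {within A, continuous (fun h => f (s + h))}.
Proof.
move=> cf DA; apply/subspace_continuousP => h Ah.
move/subspace_continuousP: cf => /(_ (s + h) (DA h Ah)) Hf.
have Hs : (fun h' => s + h') @ within A (nbhs h) --> within D (nbhs (s + h)).
  move=> P /=; rewrite /within /= => HP.
  have Hc : (fun h' : R => s + h') @ nbhs h --> nbhs (s + h).
    by apply: cvgD; [exact: cvg_cst | exact: cvg_id].
  have := Hc _ HP; rewrite /= nbhs_simpl /=.
  apply: filterS => h' HD Ah'; exact: HD (DA h' Ah').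
exact: (cvg_comp _ _ Hs Hf).
Qed.


Lemma small_pos (d u v : R) : 0 < d -> 0 < u -> 0 < v ->
  exists e, [/\ 0 < e, e < d, e < u & e < v].
Proof.
move=> d0 u0 v0; exists (Num.min d (Num.min u v) / 2).
have m0 : 0 < Num.min d (Num.min u v) by rewrite !lt_min d0 u0 v0.
have h1 : Num.min d (Num.min u v) <= d by rewrite ge_min lexx.
have h2 : Num.min d (Num.min u v) <= u by rewrite !ge_min lexx orbT.
have h3 : Num.min d (Num.min u v) <= v by rewrite !ge_min lexx !orbT.
split; lra.
Qed.

Lemma neg_all (G : R -> R) (a b : R) : a <= b -> ivt_on G a b ->
  G a < 0 -> G b < 0 ->
  (forall u v, a <= u <= b -> a <= v <= b -> G u = 0 -> G v = 0 -> u = v) ->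
  (forall z, a < z < b -> G z = 0 ->
     exists2 d, 0 < d & forall e, 0 < e < d -> G (z - e) * G (z + e) < 0) ->
  forall h, a <= h <= b -> G h < 0.
Proof.
move=> ab Hi Ga Gb Hu Hp.
have Hpos : forall h, a <= h <= b -> 0 < G h -> False.
  move=> h /andP[ah hb] Gh.
  have c1 : G a <= 0 <= G h by apply/andP; split; lra.
  have c2 : G b <= 0 <= G h by apply/andP; split; lra.
  have [z1 [/andP[z1a z1h] Gz1]] := Hi a h (lexx a) ah hb (or_introl c1).
  have [z2 [/andP[z2h z2b] Gz2]] := Hi h b ah hb (lexx b) (or_intror c2).
  have e12 : z1 = z2.
    apply: Hu => //; apply/andP; split; lra.
  have : z1 != h by apply/eqP => e; move: Gz1; rewrite e => e'; lra.
  have : z2 != h by apply/eqP => e; move: Gz2; rewrite e => e'; lra.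
  rewrite -e12 => n1 n2; lra.
move=> h /andP[ah hb].
have [Gh|Gh|Gh] := ltgtP (G h) 0; first by [].
- by exfalso; apply: (Hpos h) => //; apply/andP.
- have ha : a < h by rewrite lt_neqAle ah andbT; apply/eqP => e; move: Ga; rewrite e Gh ltxx.
  have hb' : h < b by rewrite lt_neqAle hb andbT; apply/eqP => e; move: Gb; rewrite -e Gh ltxx.
  have hz : a < h < b by rewrite ha hb'.
  have [d d0 Hd] := Hp h hz Gh.
  have [e [e0 ed eu ev]] := @small_pos d (h - a) (b - h) d0 (ltac:(lra) : 0 < h - a) (ltac:(lra) : 0 < b - h).
  have hm := Hd e (ltac:(by rewrite e0 ed)).
  have [Gl|Gl] := leP (G (h - e)) 0; last first.
    by exfalso; apply: (Hpos (h - e)) => //; apply/andP; split; lra.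
  have [Gr|Gr] := leP (G (h + e)) 0; last first.
    by exfalso; apply: (Hpos (h + e)) => //; apply/andP; split; lra.
  have := mulr_le0 Gl Gr; lra.
Qed.


Variable n : nat.
Implicit Types (x y : 'I_n -> R) (c : 'I_n -> 'I_n -> R -> R).

Lemma edge_ivt x y c (a b a' b' : 'I_n) (s t al be : R) :
  is_flag x y c -> (a < b)%N -> (a' < b')%N ->
  (forall h, al <= h <= be -> edom x a b (s + h) /\ edom x a' b' (t + h)) ->
  ivt_on (fun h => c a b (s + h) - c a' b' (t + h)) al be.
Proof.
move=> [_ _ Hc _ _] ab ab' Hd; apply: ivt_onP => u v au uv vb.
have Hin : forall h, `[u, v] h -> al <= h <= be.
  move=> h; rewrite /= in_itv /= => /andP[h1 h2]; apply/andP; split.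
    exact: le_trans au h1.
  exact: le_trans h2 vb.
apply: (@within_continuousB _ _ _ _ (fun h => c a b (s + h)) (fun h => c a' b' (t + h))).
  apply: (@shift_cont _ [set t | edom x a b t]); first by case: (Hc _ _ ab).
  by move=> h /Hin /Hd [].
apply: (@shift_cont _ [set t | edom x a' b' t]); first by case: (Hc _ _ ab').
by move=> h /Hin /Hd [].
Qed.

Lemma eivt x y c (a b a' b' : 'I_n) (s t u v : R) :
  is_flag x y c -> (a < b)%N -> (a' < b')%N -> u <= v ->
  (forall h, u <= h <= v -> edom x a b (s + h) /\ edom x a' b' (t + h)) ->
  (c a b (s + u) <= c a' b' (t + u) /\ c a' b' (t + v) <= c a b (s + v)) \/
  (c a' b' (t + u) <= c a b (s + u) /\ c a b (s + v) <= c a' b' (t + v)) ->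
  exists z, u <= z <= v /\ c a b (s + z) = c a' b' (t + z).
Proof.
move=> Hf ab ab' uv Hd Hsg.
have Hi := @edge_ivt x y c a b a' b' s t u v Hf ab ab' Hd.
have [z [hz Gz]] : exists z, u <= z <= v /\
    (fun h => c a b (s + h) - c a' b' (t + h)) z = 0.
  apply: Hi => //.
  by case: Hsg => -[h1 h2]; [left|right]; apply/andP; split; rewrite /=; lra.
by exists z; split => //; move: Gz => /= /eqP; rewrite subr_eq0 => /eqP.
Qed.

Lemma fr_s (t : R) : 0 <= t -> t < 1 -> frac t = t.
Proof. by move=> h1 h2; apply: fr_small; rewrite h1 h2. Qed.
Lemma fr_b (t : R) : 1 <= t -> t < 2 -> frac t = t - 1.
Proof. by move=> h1 h2; apply: fr_big; rewrite h1 h2. Qed.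

Lemma pneq_lt (a b a' b' : 'I_n) : (a < a')%N -> (a, b) <> (a', b').
Proof. by move=> h [e _]; rewrite e ltnn in h. Qed.
Lemma pneq_gt (a b a' b' : 'I_n) : (a' < a)%N -> (a, b) <> (a', b').
Proof. by move=> h [e _]; rewrite e ltnn in h. Qed.


Lemma xinj (x : 'I_n -> R) (Hx : forall a b : 'I_n, (a < b)%N -> x a < x b)
  (a b : 'I_n) : a != b -> x a != x b.
Proof.
move=> ab; case: (ltngtP a b) => [h|h|/val_inj e].
- by rewrite (lt_eqF (Hx _ _ h)).
- by rewrite (gt_eqF (Hx _ _ h)).
- by rewrite e eqxx in ab.
Qed.

Lemma eivt2 x y c (a b a' b' : 'I_n) (s t u v : R) :
  is_flag x y c -> (a < b)%N -> (a' < b')%N -> u <= v ->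
  x b <= s + u -> s + v <= 1 + x a -> x b' <= t + u -> t + v <= 1 + x a' ->
  (c a b (s + u) <= c a' b' (t + u) /\ c a' b' (t + v) <= c a b (s + v)) \/
  (c a' b' (t + u) <= c a b (s + u) /\ c a b (s + v) <= c a' b' (t + v)) ->
  exists z, u <= z <= v /\ c a b (s + z) = c a' b' (t + z).
Proof.
move=> Hf ab ab' uv h1 h2 h3 h4; apply: (@eivt x y c a b a' b' s t u v Hf ab ab' uv) => // h /andP[hu hv].
by rewrite /edom; split; apply/andP; split; lra.
Qed.

Lemma mk_meet x c (a b a' b' : 'I_n) (s t : R) :
  x b <= s -> s <= 1 + x a -> x b' <= t -> t <= 1 + x a' ->
  frac s = frac t -> c a b s = c a' b' t -> meet_at x c a b a' b' s t.
Proof. by move=> *; split => //; rewrite /edom; apply/andP; split. Qed.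

Lemma minex (a b : R) : exists m, [/\ m <= a, m <= b & (m = a \/ m = b)].
Proof.
case: (leP a b) => h; first by exists a; split => //; left.
by exists b; split => //; [exact: ltW | right].
Qed.

Lemma fr_cases (u : R) : 0 < u -> u < 2 ->
  (u < 1 /\ frac u = u) \/ (1 <= u /\ frac u = u - 1).
Proof.
move=> h1 h2; case: (ltP u 1) => h.
  by left; split => //; apply: fr_s => //; exact: ltW.
by right; split => //; apply: fr_b.
Qed.

Lemma fr_shift (s t h : R) : 0 < s < 2 -> 0 < t < 2 -> 0 < s + h < 2 -> 0 < t + h < 2 ->
  frac s = frac t -> frac (s + h) = frac (t + h).
Proof.
move=> /andP[s1 s2] /andP[t1 t2] /andP[u1 u2] /andP[v1 v2].
case: (@fr_cases s s1 s2) => -[? ->]; case: (@fr_cases t t1 t2) => -[? ->];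
case: (@fr_cases (s + h) u1 u2) => -[? ->]; case: (@fr_cases (t + h) v1 v2) => -[? ->]; lra.
Qed.

Lemma fr_inj (a b : R) : 0 < a -> a < 2 -> 0 < b -> b < 2 -> a <= b -> b < a + 1 ->
  frac a = frac b -> a = b.
Proof.
move=> a1 a2 b1 b2 ab ba.
by case: (@fr_cases a a1 a2) => -[? ->]; case: (@fr_cases b b1 b2) => -[? ->]; lra.
Qed.

Section Flag.
Variables (x y : 'I_n -> R) (c : 'I_n -> 'I_n -> R -> R).
Hypothesis Hx : forall a b : 'I_n, (a < b)%N -> x a < x b.
Hypothesis Hf : is_flag x y c.

Lemma xb0 (a : 'I_n) : 0 < x a. Proof. by case: Hf => H _ _ _ _; case/andP: (H a). Qed.
Lemma xb1 (a : 'I_n) : x a < 1. Proof. by case: Hf => H _ _ _ _; case/andP: (H a). Qed.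
Lemma cL (a b : 'I_n) : (a < b)%N -> c a b (x b) = y b.
Proof. by case: Hf => _ _ H _ _ ab; case: (H _ _ ab). Qed.
Lemma cR (a b : 'I_n) : (a < b)%N -> c a b (1 + x a) = y a.
Proof. by case: Hf => _ _ H _ _ ab; case: (H _ _ ab). Qed.
Lemma uniqm (a b a' b' : 'I_n) s t s' t' : (a < b)%N -> (a' < b')%N -> (a, b) <> (a', b') ->
  meet_at x c a b a' b' s t -> meet_at x c a b a' b' s' t' -> frac s = frac s'.
Proof. by case: Hf => _ _ _ _ H ab ab' ne m1 m2; case: ((H _ _ _ _ ab ab' ne).1 _ _ _ _ m1 m2). Qed.


Lemma LA1 (i j k l : 'I_n) (X : R) : (i < j)%N -> (j < k)%N -> (k < l)%N ->
  c i j (x k) < y k -> x l <= X -> X < 1 -> c k l X = c i j X ->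
  y j < c k l (1 + x j).
Proof.
move=> ij jk kl Hk X1 X2 Xe.
have := Hx _ _ ij; have := Hx _ _ jk; have := Hx _ _ kl; have := xb0 i; have := xb1 k.
move=> ? ? ? ? ?.
rewrite ltNge; apply/negP => H2.
have [Y [HY Ye]] := @eivt2 x y c i j k l 0 1 (x j) (x k) Hf ij kl (ltW (Hx _ _ jk))
  (ltac:(lra)) (ltac:(lra)) (ltac:(lra)) (ltac:(lra))
  (ltac:(rewrite !add0r cL // cR //; right; lra)).
rewrite add0r in Ye.
have m1 : meet_at x c i j k l X X by apply: mk_meet => //; lra.
have m2 : meet_at x c i j k l Y (1 + Y).
  apply: mk_meet => //; try lra; rewrite fr_s ?fr_b; lra.
have := @uniqm _ _ _ _ _ _ _ _ ij kl (pneq_lt _ _ _ _ (ltn_trans ij jk)) m1 m2.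
rewrite fr_s ?fr_s; lra.
Qed.

Lemma LA2 (j k l : 'I_n) (X : R) : (j < k)%N -> (k < l)%N ->
  y j < c k l (1 + x j) -> x l < X -> X < 1 -> c j l X < c k l X.
Proof.
move=> jk kl Hj X1 X2.
have jl := ltn_trans jk kl.
have := Hx _ _ jk; have := Hx _ _ kl; have := xb0 j; have := xb1 k.
move=> ? ? ? ?.
rewrite ltNge; apply/negP => H3.
have [Z [HZ Ze]] := @eivt2 x y c j l k l 0 0 X (1 + x j) Hf jl kl (ltac:(lra))
  (ltac:(lra)) (ltac:(lra)) (ltac:(lra)) (ltac:(lra))
  (ltac:(rewrite !add0r cR //; right; lra)).
rewrite !add0r in Ze.
have m1 : meet_at x c j l k l Z Z by apply: mk_meet => //; lra.
have m2 : meet_at x c j l k l (x l) (x l).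
  by apply: mk_meet => //; try lra; rewrite !cL.
have := @uniqm _ _ _ _ _ _ _ _ jl kl (pneq_lt _ _ _ _ jk) m1 m2.
rewrite (@fr_s (x l)); [|lra|lra].
have [Z1|Z1] : Z < 1 \/ 1 <= Z by case: (ltP Z 1); [left|right].
  by rewrite fr_s; lra.
by rewrite fr_b; lra.
Qed.

Lemma LA3 (i j l : 'I_n) (X : R) : (i < j)%N -> (j < l)%N ->
  c i j (x l) < y l -> x l <= X -> X < 1 -> c i j X < c j l X.
Proof.
move=> ij jl Hl X1 X2.
have := Hx _ _ ij; have := Hx _ _ jl; have := xb0 i; have := xb1 l.
move=> ? ? ? ?.
rewrite ltNge; apply/negP => H4.
have [W [HW We]] := @eivt2 x y c j l i j 0 0 (x l) X Hf jl ij X1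
  (ltac:(lra)) (ltac:(lra)) (ltac:(lra)) (ltac:(lra))
  (ltac:(rewrite !add0r cL //; right; lra)).
rewrite !add0r in We.
have m1 : meet_at x c j l i j W W by apply: mk_meet => //; lra.
have m2 : meet_at x c j l i j (1 + x j) (x j).
  apply: mk_meet => //; try lra; last by rewrite cR // cL.
  by rewrite fr_b ?fr_s; lra.
have := @uniqm _ _ _ _ _ _ _ _ jl ij (pneq_gt _ _ _ _ ij) m1 m2.
by rewrite fr_s ?fr_b; lra.
Qed.

Lemma LA (i j k l : 'I_n) (X : R) : (i < j)%N -> (j < k)%N -> (k < l)%N ->
  c i j (x k) < y k -> c i j (x l) < y l ->
  x l <= X -> X < 1 -> c k l X = c i j X -> False.
Proof.
move=> ij jk kl Hk Hl X1 X2 Xe.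
have XL : x l < X.
  rewrite lt_neqAle X1 andbT; apply/eqP => e.
  by move: Xe; rewrite -e cL //; lra.
have Hj := @LA1 _ _ _ _ _ ij jk kl Hk X1 X2 Xe.
have H3 := @LA2 _ _ _ _ jk kl Hj XL X2.
have H4 := @LA3 _ _ _ _ ij (ltn_trans jk kl) Hl X1 X2.
lra.
Qed.

Lemma K1 (i j k l r : 'I_n) : (i < j)%N -> (j < k)%N -> (k < l)%N ->
  c i j (x k) < y k -> c i j (x l) < y l -> x l < x r ->
  y r < c i j (x r) -> y r < c k l (x r).
Proof.
move=> ij jk kl Hk Hl lr Hr.
have := Hx _ _ ij; have := Hx _ _ jk; have := Hx _ _ kl; have := xb0 i; have := xb1 r.
move=> ? ? ? ? ?.
rewrite ltNge; apply/negP => H0.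
have [X [HX Xe]] := @eivt2 x y c k l i j 0 0 (x l) (x r) Hf kl ij (ltW lr)
  (ltac:(lra)) (ltac:(lra)) (ltac:(lra)) (ltac:(lra))
  (ltac:(rewrite !add0r cL //; right; lra)).
rewrite !add0r in Xe.
apply: (@LA _ _ _ _ X ij jk kl Hk Hl); lra.
Qed.

Lemma B1 (i j k l r : 'I_n) : (i < j)%N -> (j < k)%N -> (k < l)%N ->
  c i j (x k) < y k -> x j < x r -> x r < x k ->
  c k l (1 + x r) < c i j (x r) ->
  exists h, x r <= h <= x k /\ c i j h = c k l (1 + h).
Proof.
move=> ij jk kl Hk jr rk H.
have := Hx _ _ ij; have := Hx _ _ jk; have := Hx _ _ kl; have := xb0 i; have := xb1 l.
move=> ? ? ? ? ?.
have [h [Hh He]] := @eivt2 x y c i j k l 0 1 (x r) (x k) Hf ij kl (ltW rk)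
  (ltac:(lra)) (ltac:(lra)) (ltac:(lra)) (ltac:(lra))
  (ltac:(rewrite !add0r cR //; right; lra)).
by exists h; rewrite add0r in He.
Qed.

Lemma B2 (i j k l r : 'I_n) : (i < j)%N -> (j < k)%N -> (k < l)%N ->
  c i j (x k) < y k -> x j < x r -> x r < x k ->
  c k l (1 + x r) < c i j (x r) -> c k l (1 + x j) < y j.
Proof.
move=> ij jk kl Hk jr rk H.
have [h1 [Hh1 He1]] := @B1 _ _ _ _ _ ij jk kl Hk jr rk H.
have := Hx _ _ ij; have := Hx _ _ jk; have := Hx _ _ kl; have := xb0 i; have := xb1 l.
move=> ? ? ? ? ?.
rewrite ltNge; apply/negP => H2.
have [h2 [Hh2 He2]] := @eivt2 x y c i j k l 0 1 (x j) (x r) Hf ij kl (ltW jr)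
  (ltac:(lra)) (ltac:(lra)) (ltac:(lra)) (ltac:(lra))
  (ltac:(rewrite !add0r cL //; left; lra)).
rewrite add0r in He2.
have m1 : meet_at x c i j k l h1 (1 + h1).
  apply: mk_meet => //; try lra; rewrite fr_s ?fr_b; lra.
have m2 : meet_at x c i j k l h2 (1 + h2).
  apply: mk_meet => //; try lra; rewrite fr_s ?fr_b; lra.
have := @uniqm _ _ _ _ _ _ _ _ ij kl (pneq_lt _ _ _ _ (ltn_trans ij jk)) m1 m2.
rewrite fr_s ?fr_s; try lra; move=> e.
have e1 : h1 = x r by lra.
by move: He1; rewrite e1; lra.
Qed.

Lemma B3 (i j r : 'I_n) (w : R) : (i < j)%N -> (j < r)%N ->
  y r < c i j (x r) -> x r <= w -> w < 1 -> c j r w < c i j w.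
Proof.
move=> ij jr Hr w1 w2.
have := Hx _ _ ij; have := Hx _ _ jr; have := xb0 i.
move=> ? ? ?.
rewrite ltNge; apply/negP => H.
have [z [Hz Ze]] := @eivt2 x y c j r i j 0 0 (x r) w Hf jr ij w1
  (ltac:(lra)) (ltac:(lra)) (ltac:(lra)) (ltac:(lra))
  (ltac:(rewrite !add0r cL //; left; lra)).
rewrite !add0r in Ze.
have m1 : meet_at x c j r i j z z by apply: mk_meet => //; lra.
have m2 : meet_at x c j r i j (1 + x j) (x j).
  apply: mk_meet => //; try lra; last by rewrite cR // cL.
  by rewrite fr_b ?fr_s; lra.
have := @uniqm _ _ _ _ _ _ _ _ jr ij (pneq_gt _ _ _ _ ij) m1 m2.
by rewrite fr_s ?fr_b; lra.
Qed.

Lemma K2 (i j k l r : 'I_n) : (i < j)%N -> (j < k)%N -> (k < l)%N ->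
  c i j (x k) < y k -> c i j (x l) < y l -> (j < r)%N -> x r < x k ->
  y r < c i j (x r) -> y r < c k l (1 + x r).
Proof.
move=> ij jk kl Hk Hl jr rk Hr.
have := Hx _ _ ij; have := Hx _ _ jk; have := Hx _ _ kl; have := Hx _ _ jr.
have := xb0 i; have := xb1 l.
move=> ? ? ? ? ? ?.
rewrite ltNge; apply/negP => H0.
have Hj := @B2 _ _ _ _ _ ij jk kl Hk (Hx _ _ jr) rk (ltac:(lra)).
have Bk := @B3 _ _ _ (x k) ij jr Hr (ltac:(lra)) (ltac:(lra)).
have Bl := @B3 _ _ _ (x l) ij jr Hr (ltac:(lra)) (ltac:(lra)).
have [h3 [Hh3 He3]] := @eivt2 x y c j r k l 0 1 (x r) (x k) Hf jr kl (ltW rk)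
  (ltac:(lra)) (ltac:(lra)) (ltac:(lra)) (ltac:(lra))
  (ltac:(rewrite !add0r cL // cR //; right; lra)).
rewrite add0r in He3.
have [z [Hz Ze]] := @eivt2 x y c j r k l 0 0 (x l) (1 + x j) Hf jr kl (ltac:(lra))
  (ltac:(lra)) (ltac:(lra)) (ltac:(lra)) (ltac:(lra))
  (ltac:(rewrite !add0r cL // cR //; left; lra)).
rewrite !add0r in Ze.
have m1 : meet_at x c j r k l h3 (1 + h3).
  apply: mk_meet => //; try lra; rewrite fr_s ?fr_b; lra.
have m2 : meet_at x c j r k l z z by apply: mk_meet => //; lra.
have := @uniqm _ _ _ _ _ _ _ _ jr kl (pneq_lt _ _ _ _ jk) m1 m2.
rewrite fr_s; try lra.
have [Z1|Z1] : z < 1 \/ 1 <= z by case: (ltP z 1); [left|right].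
  by rewrite fr_s; lra.
by rewrite fr_b; lra.
Qed.

End Flag.

End S.

Local Notation frac := Defs.frac.
Arguments xb0 {R n x y c}. Arguments xb1 {R n x y c}. Arguments cL {R n x y c}.
Arguments cR {R n x y c}. Arguments uniqm {R n x y c} Hf {a b a' b' s t s' t'}.
Arguments eivt2 {R n x y c}. Arguments mk_meet {R n x c}.
Arguments edge_ivt {R n x y c}. Arguments xinj {R n x} Hx {a b}.
Arguments K1 {R n x y c} Hx Hf {i j k l r}. Arguments K2 {R n x y c} Hx Hf {i j k l r}.

Lemma Kfull (R : realType) (n : nat) (x y : 'I_n -> R) (c : 'I_n -> 'I_n -> R -> R)
  (Hx : forall a b : 'I_n, (a < b)%N -> x a < x b) (Hf : is_flag x y c)
  (i j k l r : 'I_n) : (i < j)%N -> (j < k)%N -> (k < l)%N ->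
  c i j (x k) < y k -> c i j (x l) < y l -> (j < r)%N -> r != k -> r != l ->
  y r < c i j (x r) -> forall t, edom x k l t -> frac t = x r -> y r < c k l t.
Proof.
move=> ij jk kl Hk Hl jr rk rl Hr t /andP[t1 t2] Ht.
have := xb0 Hf r; have := xb1 Hf r; have := xb0 Hf k; have := xb1 Hf l.
have := Hx _ _ kl; have := xinj Hx rk; have := xinj Hx rl.
move=> ? ? ? ? ? ? ?.
have [T1|T1] : t < 1 \/ 1 <= t by case: (ltP t 1); [left|right].
  move: Ht; rewrite fr_s; try lra; move=> e; rewrite e.
  apply: (K1 Hx Hf ij jk kl Hk Hl _ Hr); lra.
move: Ht; rewrite fr_b; try lra; move=> e.
have -> : t = 1 + x r by lra.
apply: (K2 Hx Hf ij jk kl Hk Hl jr _ Hr); lra.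
Qed.

Lemma flip_flag (R : realType) (n : nat) (x y : 'I_n -> R) (c : 'I_n -> 'I_n -> R -> R) :
  is_flag x y c -> is_flag x (fun a => - y a) (fun a b t => - c a b t).
Proof.
case=> H1 H2 H3 H4 H5.
have E : forall a b d e : R, (- a - - b) * (- d - - e) = (a - b) * (d - e).
  by move=> *; ring.
split => //.
- move=> a b ab; have [cc e1 e2] := H3 _ _ ab; split; [|by rewrite e1|by rewrite e2].
  by move=> t; apply/continuousN/cc.
- move=> a b m ab ma mb t Ht Hft /oppr_inj; exact: H4 a b m ab ma mb t Ht Hft.
- move=> a b a' b' ab ab' ne; have [U P] := H5 _ _ _ _ ab ab' ne.
  have unf : forall s t, meet_at x (fun a b t => - c a b t) a b a' b' s t ->
      meet_at x c a b a' b' s t.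
    by move=> s t [h1 h2 h3 /oppr_inj h4]; split.
  split.
  + move=> s t s' t' m1 m2; have [f1 f2] := U _ _ _ _ (unf _ _ m1) (unf _ _ m2).
    by split => //; rewrite f2.
  + move=> s t m; case: (P s t (unf _ _ m)) => [[m0 [h1 h2 h3 h4]]|[p1 p2 p3 p4 [d d0 Hd]]].
      by left; exists m0; split => //; rewrite h4.
    right; split => //; first by rewrite p4.
    by exists d => // e he; rewrite E; apply: Hd.
Qed.

Lemma Vp (R : realType) (n : nat) (x y : 'I_n -> R) (c : 'I_n -> 'I_n -> R -> R)
  (Hx : forall a b : 'I_n, (a < b)%N -> x a < x b) (Hf : is_flag x y c)
  (i j s : 'I_n) : (i < j)%N -> s \in Vplus x y c i j -> (j < s)%N /\ c i j (x s) < y s.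
Proof.
move=> ij; rewrite inE => /andP[js /asboolP [t [/andP[t1 t2] ft ct]]].
split => //.
have := Hx _ _ js; have := Hx _ _ ij; have := xb0 Hf i; have := xb1 Hf s.
move=> ? ? ? ?.
have [T1|T1] : t < 1 \/ 1 <= t by case: (ltP t 1); [left|right].
  by move: ft; rewrite fr_s; try lra; move=> e; rewrite -e.
by move: ft; rewrite fr_b; lra.
Qed.

Lemma Vm (R : realType) (n : nat) (x y : 'I_n -> R) (c : 'I_n -> 'I_n -> R -> R)
  (Hx : forall a b : 'I_n, (a < b)%N -> x a < x b) (Hf : is_flag x y c)
  (i j s : 'I_n) : (i < j)%N -> s \in Vminus x y c i j -> (j < s)%N /\ y s < c i j (x s).
Proof.
move=> ij; rewrite inE => /andP[js /asboolP [t [/andP[t1 t2] ft ct]]].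
split => //.
have := Hx _ _ js; have := Hx _ _ ij; have := xb0 Hf i; have := xb1 Hf s.
move=> ? ? ? ?.
have [T1|T1] : t < 1 \/ 1 <= t by case: (ltP t 1); [left|right].
  by move: ft; rewrite fr_s; try lra; move=> e; rewrite -e.
by move: ft; rewrite fr_b; lra.
Qed.

Arguments Kfull {R n x y c} Hx Hf {i j k l r}. Arguments flip_flag {R n x y c}. Arguments Vp {R n x y c}. Arguments Vm {R n x y c}.

Lemma Mn (R : realType) (n : nat) (x y : 'I_n -> R) (c : 'I_n -> 'I_n -> R -> R)
  (Hx : forall a b : 'I_n, (a < b)%N -> x a < x b) (Hf : is_flag x y c)
  (i j k l p q : 'I_n) : (i < j)%N -> (j < k)%N -> (k < l)%N -> (j < p)%N -> (p < q)%N ->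
  c i j (x k) < y k -> c i j (x l) < y l -> y p < c i j (x p) -> y q < c i j (x q) ->
  p != k -> p != l -> q != k -> q != l ->
  forall s t, edom x p q s -> edom x k l t -> frac s = frac t -> c p q s < c k l t.
Proof.
move=> ij jk kl jp pq Hk Hl Hp Hq pk pl qk ql s t Hs0 Ht0 fst.
have jq := ltn_trans jp pq; have jl := ltn_trans jk kl.
have Kq := Kfull Hx Hf ij jk kl Hk Hl jq qk ql Hq.
have Kp := Kfull Hx Hf ij jk kl Hk Hl jp pk pl Hp.
have Hf' := flip_flag Hf.
have Kk : forall s', edom x p q s' -> frac s' = x k -> c p q s' < y k.
  move=> s' H1 H2.
  have := Kfull Hx Hf' ij jp pq (ltac:(simpl; lra)) (ltac:(simpl; lra)) jk
    (ltac:(by rewrite eq_sym)) (ltac:(by rewrite eq_sym)) (ltac:(simpl; lra)) s' H1 H2.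
  move=> /=; lra.
have Kl : forall s', edom x p q s' -> frac s' = x l -> c p q s' < y l.
  move=> s' H1 H2.
  have := Kfull Hx Hf' ij jp pq (ltac:(simpl; lra)) (ltac:(simpl; lra)) jl
    (ltac:(by rewrite eq_sym)) (ltac:(by rewrite eq_sym)) (ltac:(simpl; lra)) s' H1 H2.
  move=> /=; lra.
move: Hs0 Ht0 => /andP[s1 s2] /andP[t1 t2].
have := Hx _ _ pq; have := Hx _ _ kl; have := xb0 Hf p; have := xb0 Hf k.
have := xb1 Hf q; have := xb1 Hf l.
move=> ? ? ? ? ? ?.
have [e1 [e1a e1b e1c]] := minex (s - x q) (t - x l).
have [e2 [e2a e2b e2c]] := minex (1 + x p - s) (1 + x k - t).
have e1p : 0 <= e1 by case: e1c => ->; lra.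
have e2p : 0 <= e2 by case: e2c => ->; lra.
have Hdom : forall h, -e1 <= h <= e2 -> edom x p q (s + h) /\ edom x k l (t + h).
  by move=> h /andP[h1 h2]; rewrite /edom; split; apply/andP; split; lra.
have Hfr : forall h, -e1 <= h <= e2 -> frac (s + h) = frac (t + h).
  move=> h /andP[h1 h2]; apply: fr_shift => //; apply/andP; split; lra.
have Hi := @edge_ivt _ _ _ _ _ p q k l s t (- e1) e2 Hf pq kl Hdom.
set G := fun h => c p q (s + h) - c k l (t + h).
have Ga : G (- e1) < 0.
  rewrite /G; case: e1c => e.
    have E : s + - e1 = x q by lra.
    have F : frac (t + - e1) = x q.
      rewrite -Hfr; last by apply/andP; split; lra.
      by rewrite E fr_s //; lra.
    have := Kq (t + - e1) (ltac:(by rewrite /edom; apply/andP; split; lra)) F.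
    rewrite E (cL Hf) //; lra.
  have E : t + - e1 = x l by lra.
  have F : frac (s + - e1) = x l.
    rewrite Hfr; last by apply/andP; split; lra.
    by rewrite E fr_s //; lra.
  have := Kl (s + - e1) (ltac:(by rewrite /edom; apply/andP; split; lra)) F.
  rewrite E (cL Hf) //; lra.
have Gb : G e2 < 0.
  rewrite /G; case: e2c => e.
    have E : s + e2 = 1 + x p by lra.
    have F : frac (t + e2) = x p.
      rewrite -Hfr; last by apply/andP; split; lra.
      by rewrite E fr_b //; lra.
    have := Kp (t + e2) (ltac:(by rewrite /edom; apply/andP; split; lra)) F.
    rewrite E (cR Hf) //; lra.
  have E : t + e2 = 1 + x k by lra.
  have F : frac (s + e2) = x k.
    rewrite Hfr; last by apply/andP; split; lra.
    by rewrite E fr_b //; lra.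
  have := Kk (s + e2) (ltac:(by rewrite /edom; apply/andP; split; lra)) F.
  rewrite E (cR Hf) //; lra.
have pqkl : (p, q) <> (k, l) by move=> [e _]; rewrite e eqxx in pk.
have Hm : forall h, -e1 <= h <= e2 -> G h = 0 -> meet_at x c p q k l (s + h) (t + h).
  move=> h hh /eqP; rewrite /G subr_eq0 => /eqP Gh.
  have [d1 d2] := Hdom h hh.
  by split => //; apply: Hfr.
have Hu : forall u v, -e1 <= u <= e2 -> -e1 <= v <= e2 -> G u = 0 -> G v = 0 -> u = v.
  move=> u v hu hv Gu Gv.
  have e := uniqm Hf pq kl pqkl (Hm _ hu Gu) (Hm _ hv Gv).
  move: hu hv => /andP[? ?] /andP[? ?].
  case: (leP u v) => uv.
    have := @fr_inj R (s + u) (s + v); lra.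
  have := @fr_inj R (s + v) (s + u); lra.
have Hp' : forall z, -e1 < z < e2 -> G z = 0 ->
    exists2 d, 0 < d & forall e, 0 < e < d -> G (z - e) * G (z + e) < 0.
  move=> z /andP[z1 z2] Gz.
  have hz : -e1 <= z <= e2 by apply/andP; split; lra.
  have m := Hm z hz Gz.
  case: Hf => _ _ _ _ HS.
  case: ((HS _ _ _ _ pq kl pqkl).2 _ _ m) => [[m0 [[]-> []/eqP]]|[_ _ _ _ [d d0 Hd]]].
  - by rewrite (negbTE pk).
  - by rewrite (negbTE pl).
  - by rewrite (negbTE qk).
  - by rewrite (negbTE ql).
  - exists d => // e he; have := Hd e he; rewrite /G.
    by rewrite !addrA.
have := @neg_all R G (- e1) e2 (ltac:(lra)) Hi Ga Gb Hu Hp' 0 (ltac:(apply/andP; split; lra)).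
by rewrite /G !addr0; lra.
Qed.

Arguments Mn {R n x y c} Hx Hf {i j k l p q}.
Arguments Vp {R n x y c} Hx Hf {i j s}. Arguments Vm {R n x y c} Hx Hf {i j s}.

Lemma eint_edom (R : realType) (n : nat) (x : 'I_n -> R) (a b : 'I_n) (t : R) :
  eint x a b t -> edom x a b t.
Proof. by move=> /andP[h1 h2]; apply/andP; split; apply: ltW. Qed.
Arguments eint_edom {R n x a b t}.

Theorem claim14 (R : realType) (n : nat) (x y : 'I_n -> R)
    (c : 'I_n -> 'I_n -> R -> R) (i j : 'I_n) :
  (forall a b : 'I_n, (a < b)%N -> x a < x b) ->
  is_flag x y c ->
  (i < j)%N ->
  separating x y c i j ->
  forall k l p q : 'I_n,
    (k < l)%N -> k \in Vplus x y c i j -> l \in Vplus x y c i j ->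
    (p < q)%N -> p \in Vminus x y c i j -> q \in Vminus x y c i j ->
    (forall s t, ~ meet_at x c k l p q s t) /\
    related x c p q k l /\ prec x c p q k l.
Proof.
move=> Hx Hf ij _ k l p q kl Hk Hl pq Hp Hq.
have [jk Hk'] := Vp Hx Hf ij Hk; have [jl Hl'] := Vp Hx Hf ij Hl.
have [jp Hp'] := Vm Hx Hf ij Hp; have [jq Hq'] := Vm Hx Hf ij Hq.
have ne : forall a b, c i j (x a) < y a -> y b < c i j (x b) -> b != a.
  by move=> a b h1 h2; apply/eqP => e; move: h1; rewrite -e; lra.
have M := Mn Hx Hf ij jk kl jp pq Hk' Hl' Hp' Hq' (ne _ _ Hk' Hp') (ne _ _ Hl' Hp')
  (ne _ _ Hk' Hq') (ne _ _ Hl' Hq').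
have Pr : prec x c p q k l.
  move=> s t [h1 h2 h3]; apply: ltW; apply: M => //; exact: eint_edom.
split.
  move=> s t [h1 h2 h3 h4]; have := M t s h2 h1 (esym h3); lra.
split => //; split.
- move=> [s [t [h1 h2 h3 h4 _]]]; have := M s t (eint_edom h1) (eint_edom h2) h3; lra.
- have := Hx _ _ pq; have := Hx _ _ kl; have := xb0 Hf p; have := xb0 Hf k.
  have := xb1 Hf q; have := xb1 Hf l.
  move=> ? ? ? ? ? ?.
  case: (leP (x q) (x l)) => h.
    by exists ((1 + x l) / 2), ((1 + x l) / 2); split => //; apply/andP; split; lra.
  by exists ((1 + x q) / 2), ((1 + x q) / 2); split => //; apply/andP; split; lra.
- by left.
Qed.
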